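(* Let $X$ be a set with exactly four elements and let $B_X$ be the monoid of binary relations on $X$. For every field $k$, the monoid algebra $kB_X$ is of infinite representation type.
   Context: The monoid of binary relations $B_X$ on a set $X$ consists of all subsets of $X\times X$, with multiplication given by composition of relations: $(R S) = \{(x,z): \exists y\in X,\ (x,y)\in R,\ (y,z)\in S\}$; the identity is the diagonal relation. A finite-dimensional $k$-algebra is of infinite representation type if it has infinitely many isomorphism classes of finite-dimensional indecomposable modules. *)

(* Defs.v *)
From HB Require Import structures.
From mathcomp Require Import all_boot all_order all_algebra.
Set Implicit Arguments. Unset Strict Implicit. Unset Printing Implicit Defensive.
Import GRing.Theory.
Local Open Scope ring_scope.

Definition rel_on (X : finType) := {set X * X}.

Definition rel_comp (X : finType) (R S : rel_on X) : rel_on X :=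
  [set p | [exists y, ((p.1, y) \in R) && ((y, p.2) \in S)]].

Definition rel_diag (X : finType) : rel_on X := [set p | p.1 == p.2].

(* A finite-dimensional (left) module over the monoid algebra k B_X is the
   same as a unital monoid action of B_X on k^n by linear maps.
   Convention: vectors are row vectors, R acts by v |-> v *m rho R, so a
   left action requires rho (R S) = rho S *m rho R. *)
Definition is_BX_rep (k : fieldType) (X : finType) (n : nat)
  (rho : rel_on X -> 'M[k]_n) : Prop :=
  rho (rel_diag X) = 1%:M /\
  forall R S : rel_on X, rho (rel_comp R S) = rho S *m rho R.

Record BXmod (k : fieldType) (X : finType) := BXMod {
  mdim : nat;
  mact : rel_on X -> 'M[k]_mdim;
  mact_rep : is_BX_rep mact }.

Definition mod_iso (k : fieldType) (X : finType) (M N : BXmod k X) : Prop :=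
  exists (P : 'M[k]_(mdim M, mdim N)) (Q : 'M[k]_(mdim N, mdim M)),
    [/\ P *m Q = 1%:M, Q *m P = 1%:M &
        forall R : rel_on X, mact M R *m P = P *m mact N R].

Definition indecomposable (k : fieldType) (X : finType) (M : BXmod k X) : Prop :=
  (0 < mdim M)%N /\
  ~ exists U W : 'M[k]_(mdim M),
      [/\ U != 0, W != 0,
          forall R : rel_on X, stablemx U (mact M R),
          forall R : rel_on X, stablemx W (mact M R) &
          (U :&: W == (0 : 'M[k]_(mdim M)))%MS && (U + W == 1%:M)%MS].

Definition infinite_rep_type (k : fieldType) (X : finType) : Prop :=
  ~ exists (N : nat) (F : 'I_N -> BXmod k X),
      forall M : BXmod k X, indecomposable M -> exists i : 'I_N, mod_iso M (F i).

(* Main.v *)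
Require Import Defs.
From mathcomp Require Import all_boot all_order all_algebra zify.
From Stdlib Require Import FunctionalExtensionality.
Set Implicit Arguments. Unset Strict Implicit. Unset Printing Implicit Defensive.


Definition rtr (X : finType) (R : rel_on X) : rel_on X := [set p | (p.2, p.1) \in R].

Lemma in_comp (X : finType) (R S : rel_on X) x z :
  ((x, z) \in rel_comp R S) = [exists y, ((x, y) \in R) && ((y, z) \in S)].
Proof. by rewrite /rel_comp inE. Qed.

Lemma in_diag (X : finType) (x z : X) : ((x, z) \in rel_diag X) = (x == z).
Proof. by rewrite /rel_diag inE. Qed.

Lemma in_rtr (X : finType) (R : rel_on X) x z : ((x, z) \in rtr R) = ((z, x) \in R).
Proof. by rewrite /rtr inE. Qed.

Lemma rcompA (X : finType) (R S T : rel_on X) :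
  rel_comp (rel_comp R S) T = rel_comp R (rel_comp S T).
Proof.
apply/setP => [[x z]]; rewrite !in_comp; apply/existsP/existsP.
- move=> [y /andP[]]; rewrite in_comp => /existsP[w /andP[h1 h2]] h3.
  by exists w; rewrite h1 in_comp; apply/existsP; exists y; rewrite h2 h3.
- move=> [y /andP[h1]]; rewrite in_comp => /existsP[w /andP[h2 h3]].
  by exists w; rewrite h3 andbT in_comp; apply/existsP; exists y; rewrite h1 h2.
Qed.

Lemma comp1r (X : finType) (R : rel_on X) : rel_comp (rel_diag X) R = R.
Proof.
apply/setP => [[x z]]; rewrite in_comp; apply/existsP/idP.
- by move=> [y /andP[]]; rewrite in_diag => /eqP ->.
- by move=> h; exists x; rewrite in_diag eqxx.
Qed.

Lemma compr1 (X : finType) (R : rel_on X) : rel_comp R (rel_diag X) = R.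
Proof.
apply/setP => [[x z]]; rewrite in_comp; apply/existsP/idP.
- by move=> [y /andP[h]]; rewrite in_diag => /eqP <-.
- by move=> h; exists z; rewrite in_diag eqxx andbT.
Qed.

Lemma rtr_comp (X : finType) (R S : rel_on X) :
  rtr (rel_comp R S) = rel_comp (rtr S) (rtr R).
Proof.
apply/setP => [[x z]]; rewrite in_rtr !in_comp; apply/existsP/existsP.
- by move=> [y /andP[h1 h2]]; exists y; rewrite !in_rtr h1 h2.
- by move=> [y]; rewrite !in_rtr => /andP[h1 h2]; exists y; rewrite h1 h2.
Qed.

Lemma rtrK (X : finType) (R : rel_on X) : rtr (rtr R) = R.
Proof. by apply/setP => [[x z]]; rewrite !in_rtr. Qed.

Definition unitb (X : finType) (R : rel_on X) : bool :=
  (rel_comp R (rtr R) == rel_diag X) && (rel_comp (rtr R) R == rel_diag X).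

Lemma unit_tr (X : finType) (R : rel_on X) : unitb R -> unitb (rtr R).
Proof. by rewrite /unitb rtrK andbC. Qed.

Lemma unit_comp (X : finType) (R S : rel_on X) :
  unitb R -> unitb S -> unitb (rel_comp R S).
Proof.
move=> /andP[/eqP r1 /eqP r2] /andP[/eqP s1 /eqP s2]; apply/andP; split; apply/eqP.
- by rewrite rtr_comp rcompA -(rcompA S) s1 comp1r r1.
- by rewrite rtr_comp rcompA -(rcompA (rtr R)) r2 comp1r s2.
Qed.

Lemma unit_diag (X : finType) : unitb (rel_diag X).
Proof.
rewrite /unitb; have -> : rtr (rel_diag X) = rel_diag X.
  by apply/setP => [[x z]]; rewrite in_rtr !in_diag eq_sym.
by rewrite comp1r eqxx.
Qed.

Lemma unitKl (X : finType) (u R : rel_on X) : unitb u ->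
  rel_comp (rtr u) (rel_comp u R) = R.
Proof. by move=> /andP[_ /eqP h]; rewrite -rcompA h comp1r. Qed.

Lemma unitKl' (X : finType) (u R : rel_on X) : unitb u ->
  rel_comp u (rel_comp (rtr u) R) = R.
Proof. by move=> /andP[/eqP h _]; rewrite -rcompA h comp1r. Qed.

Lemma unitKr (X : finType) (u R : rel_on X) : unitb u ->
  rel_comp (rel_comp R u) (rtr u) = R.
Proof. by move=> /andP[/eqP h _]; rewrite rcompA h compr1. Qed.

Lemma unitKr' (X : finType) (u R : rel_on X) : unitb u ->
  rel_comp (rel_comp R (rtr u)) u = R.
Proof. by move=> /andP[_ /eqP h]; rewrite rcompA h compr1. Qed.

Lemma unit_compl (X : finType) (u R : rel_on X) : unitb u ->
  unitb (rel_comp u R) = unitb R.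
Proof.
move=> hu; apply/idP/idP => h; last exact: unit_comp.
by rewrite -(unitKl R hu); apply: unit_comp => //; apply: unit_tr.
Qed.

Lemma unit_compr (X : finType) (u R : rel_on X) : unitb u ->
  unitb (rel_comp R u) = unitb R.
Proof.
move=> hu; apply/idP/idP => h; last exact: unit_comp.
by rewrite -(unitKr R hu); apply: unit_comp => //; apply: unit_tr.
Qed.

Definition prime_rel (X : finType) (p : rel_on X) :=
  forall a b : rel_on X, rel_comp a b = p -> unitb a || unitb b.

Definition inO (X : finType) (p R : rel_on X) : bool :=
  [exists u, exists v, [&& unitb u, unitb v & R == rel_comp u (rel_comp p v)]].

Lemma inO_l (X : finType) (p w R : rel_on X) : unitb w ->
  inO p (rel_comp w R) = inO p R.
Proof.
move=> hw; apply/existsP/existsP => [[u /existsP[v /and3P[hu hv /eqP e]]]|[u /existsP[v /and3P[hu hv /eqP e]]]].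
- exists (rel_comp (rtr w) u); apply/existsP; exists v.
  rewrite unit_comp ?unit_tr //= hv /= -(unitKl R hw) e rcompA eqxx //.
- exists (rel_comp w u); apply/existsP; exists v.
  by rewrite unit_comp //= hv e rcompA eqxx.
Qed.

Lemma inO_r (X : finType) (p w R : rel_on X) : unitb w ->
  inO p (rel_comp R w) = inO p R.
Proof.
move=> hw; apply/existsP/existsP => [[u /existsP[v /and3P[hu hv /eqP e]]]|[u /existsP[v /and3P[hu hv /eqP e]]]].
- exists u; apply/existsP; exists (rel_comp v (rtr w)).
  by rewrite hu unit_comp ?unit_tr //= -(unitKr R hw) e !rcompA eqxx.
- exists u; apply/existsP; exists (rel_comp v w).
  by rewrite hu unit_comp //= e !rcompA eqxx.
Qed.

Lemma inO_self (X : finType) (p : rel_on X) : inO p p.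
Proof.
apply/existsP; exists (rel_diag X); apply/existsP; exists (rel_diag X).
by rewrite unit_diag compr1 comp1r eqxx.
Qed.

Lemma prime_inO (X : finType) (p R a b : rel_on X) : prime_rel p -> inO p R ->
  rel_comp a b = R -> unitb a || unitb b.
Proof.
move=> hp /existsP[u /existsP[v /and3P[hu hv /eqP e]]] hab.
have := hp (rel_comp (rtr u) a) (rel_comp b (rtr v)).
rewrite rcompA -(rcompA a) hab e -(rcompA u p v) unitKr // unitKl //.
by move=> /(_ erefl); rewrite unit_compl ?unit_compr ?unit_tr.
Qed.

Lemma prime_unit (X : finType) (a b : rel_on X) : prime_rel (rel_diag X) ->
  unitb (rel_comp a b) -> unitb a || unitb b.
Proof.
move=> hp hu; have := hp a (rel_comp b (rtr (rel_comp a b))).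
rewrite -rcompA; case/andP: (hu) => /eqP -> _ /(_ erefl).
by rewrite unit_compr // unit_tr.
Qed.

Definition fullb (X : finType) (R : rel_on X) := rel_comp R (rtr R) == setT.

Lemma inO_full (X : finType) (p R : rel_on X) : inO p R -> fullb p -> fullb R.
Proof.
move=> /existsP[u /existsP[v /and3P[hu hv /eqP ->]]] /eqP hp.
have rowu : forall x, exists y, (x, y) \in u.
  move=> x; case/andP: hu => /eqP h _.
  have : (x, x) \in rel_comp u (rtr u) by rewrite h in_diag.
  by rewrite in_comp => /existsP[y /andP[h1 _]]; exists y.
have E : rel_comp (rel_comp u (rel_comp p v)) (rtr (rel_comp u (rel_comp p v)))
   = rel_comp u (rel_comp (rel_comp p (rtr p)) (rtr u)).
  case/andP: hv => /eqP hv _.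
  by rewrite !rtr_comp !rcompA -(rcompA v (rtr v)) hv comp1r.
rewrite /fullb E hp.
apply/eqP/setP => [[x z]]; rewrite in_setT in_comp.
case: (rowu x) => y hy; case: (rowu z) => w hw.
apply/existsP; exists y; rewrite hy in_comp; apply/existsP; exists w.
by rewrite in_setT in_rtr hw.
Qed.


Definition bm := 'I_4 -> 'I_4 -> bool.
Definition o0 : 'I_4 := @Ordinal 4 0 isT.
Definition o1 : 'I_4 := @Ordinal 4 1 isT.
Definition o2 : 'I_4 := @Ordinal 4 2 isT.
Definition o3 : 'I_4 := @Ordinal 4 3 isT.
Definition fa (P : 'I_4 -> bool) :=
  if P o0 then if P o1 then if P o2 then P o3 else false else false else false.
Definition ex (P : 'I_4 -> bool) :=
  if P o0 then true else if P o1 then true else if P o2 then true else P o3.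
Definition unit_f (m : bm) : bool :=
  fa (fun i => fa (fun k => ex (fun j => m i j && m k j) == (i == k))) &&
  fa (fun i => fa (fun k => ex (fun j => m j i && m j k) == (i == k))).
Definition amax_f (p m : bm) : bm :=
  fun i y => fa (fun z => if m y z then p i z else true).
Definition ords := [:: o0; o1; o2; o3].
Definition tab (f : bm) : seq (seq bool) := [seq [seq f i y | y <- ords] | i <- ords].
Definition m_of (l : seq (seq bool)) : bm := fun i j => nth false (nth [::] l i) j.
Definition cond_f (p m : bm) : bool :=
  let a := m_of (tab (amax_f p m)) in
  if fa (fun i => fa (fun z => p i z == ex (fun y => if a i y then m y z else false)))
  then (if unit_f m then true else unit_f a) else true.
Fixpoint all_lists {A : Type} (xs : seq A) (n : nat) : seq (seq A) :=
  if n is n'.+1 then [seq b :: l | b <- xs, l <- all_lists xs n'] else [:: [::]].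
Definition all_mats := all_lists (all_lists [:: true; false] 4) 4.
Definition check (pl : seq (seq bool)) :=
  fa (fun i => ex (fun z => m_of pl i z)) &&
  all (fun l => cond_f (m_of pl) (m_of l)) all_mats.

Lemma ords_cover (i : 'I_4) : i = o0 \/ i = o1 \/ i = o2 \/ i = o3.
Proof.
case: i => [[|[|[|[|n]]]] Hi].
- by left; apply: val_inj.
- by right; left; apply: val_inj.
- by right; right; left; apply: val_inj.
- by right; right; right; apply: val_inj.
- by [].
Qed.

Lemma faP (P : 'I_4 -> bool) : reflect (forall i, P i) (fa P).
Proof.
apply: (iffP idP).
- rewrite /fa => h i; case: (ords_cover i) => [->|[->|[->|->]]]; move: h;
  by case: (P o0); case: (P o1); case: (P o2); case: (P o3).
- by move=> h; rewrite /fa !h.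
Qed.

Lemma exE (P : 'I_4 -> bool) : ex P = [exists i, P i].
Proof.
apply/idP/existsP.
- rewrite /ex; case h0: (P o0); first by exists o0.
  case h1: (P o1); first by exists o1.
  case h2: (P o2); first by exists o2.
  by move=> h3; exists o3.
- case=> i; case: (ords_cover i) => [->|[->|[->|->]]] h; rewrite /ex h //.
  + by case: (P o0).
  + by case: (P o0); case: (P o1).
  + by case: (P o0); case: (P o1); case: (P o2).
Qed.

Lemma m_of_tab (f : bm) : m_of (tab f) = f.
Proof.
apply: functional_extensionality => i; apply: functional_extensionality => j.
by case: (ords_cover i) => [->|[->|[->|->]]]; case: (ords_cover j) => [->|[->|[->|->]]].
Qed.

Lemma all_lists_mem (A : eqType) (xs : seq A) n (l : seq A) :
  size l = n -> all (fun x => x \in xs) l -> l \in all_lists xs n.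
Proof.
elim: n l => [|n IH] [|x l] //= [hs] /andP[hx hl].
by apply: (allpairs_f (fun b l => b :: l)) => //; apply: IH.
Qed.

Definition mrel (R : rel_on 'I_4) : bm := fun i j => (i, j) \in R.

Lemma tab_in (R : rel_on 'I_4) : tab (mrel R) \in all_mats.
Proof.
apply: all_lists_mem => //; apply/allP => r /mapP[i _ ->].
apply: all_lists_mem => //; apply/allP => b _.
by case: b.
Qed.

Lemma unitbP (X : finType) (R : rel_on X) :
  reflect ((forall i k, [exists j, ((i, j) \in R) && ((k, j) \in R)] = (i == k)) /\
           (forall i k, [exists j, ((j, i) \in R) && ((j, k) \in R)] = (i == k)))
          (unitb R).
Proof.
apply: (iffP andP).
- case=> /eqP h1 /eqP h2; split => i k.
  + move/setP: h1 => /(_ (i, k)); rewrite in_comp in_diag => <-.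
    by apply: eq_existsb => j; rewrite in_rtr.
  + move/setP: h2 => /(_ (i, k)); rewrite in_comp in_diag => <-.
    by apply: eq_existsb => j; rewrite in_rtr.
- case=> h1 h2; split; apply/eqP/setP => [[i k]]; rewrite in_comp in_diag.
  + by rewrite -h1; apply: eq_existsb => j; rewrite in_rtr.
  + by rewrite -h2; apply: eq_existsb => j; rewrite in_rtr.
Qed.

Lemma unit_fE (R : rel_on 'I_4) : unit_f (mrel R) = unitb R.
Proof.
apply/idP/unitbP.
- case/andP => /faP h1 /faP h2; split => i k.
  + by move/faP: (h1 i) => /(_ k) /eqP <-; rewrite exE.
  + by move/faP: (h2 i) => /(_ k) /eqP <-; rewrite exE.
- case=> h1 h2; apply/andP; split; apply/faP => i; apply/faP => k.
  + by rewrite exE h1.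
  + by rewrite exE h2.
Qed.

Definition relof (p : bm) : rel_on 'I_4 := [set q | p q.1 q.2].

Lemma check_prime (pl : seq (seq bool)) : check pl = true -> prime_rel (relof (m_of pl)).
Proof.
case/andP => /faP hrow /allP hall a b hab.
set p := m_of pl.
have hc := hall _ (tab_in b); rewrite /cond_f m_of_tab in hc.
set A := relof (amax_f p (m_of (tab (mrel b)))).
rewrite m_of_tab in A hc.
have inP i z : ((i, z) \in relof p) = p i z by rewrite inE.
have hA i y : ((i, y) \in A) = [forall z, ((y, z) \in b) ==> p i z].
  rewrite inE /amax_f /=; apply/faP/forallP => h z.
  - by move: (h z); rewrite /mrel; case: ((y, z) \in b).
  - by move: (h z); rewrite /mrel; case: ((y, z) \in b).
have aA : forall i y, (i, y) \in a -> (i, y) \in A.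
  move=> i y hiy; rewrite hA; apply/forallP => z; apply/implyP => hyz.
  by rewrite -inP -hab in_comp; apply/existsP; exists y; rewrite hiy hyz.
have prem : fa (fun i => fa (fun z => p i z ==
         ex (fun y => if amax_f p (mrel b) i y then mrel b y z else false))).
  apply/faP => i; apply/faP => z; rewrite exE; apply/eqP.
  have e y : (if amax_f p (mrel b) i y then mrel b y z else false)
             = ((i, y) \in A) && ((y, z) \in b).
    by rewrite /A inE /=; case: (amax_f _ _ _ _).
  rewrite (eq_existsb e); apply/idP/existsP.
  - rewrite -inP -hab in_comp => /existsP[y /andP[h1 h2]].
    by exists y; rewrite aA.
  - case=> y /andP[]; rewrite hA => /forallP /(_ z) /implyP h1 h2.
    exact: h1.
rewrite prem in hc.
move: hc; case: ifP => hub hc; first by rewrite -(unit_fE b) hub orbT.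
have hAu : unitb A.
  rewrite -unit_fE; move: hc; congr (is_true (unit_f _)).
  apply: functional_extensionality => i; apply: functional_extensionality => y.
  by rewrite /mrel /A inE.
suff -> : a = A by rewrite hAu.
apply/setP => [[i y]]; apply/idP/idP; first exact: aA.
move=> hiy; have := hrow i; rewrite exE => /existsP[z hz].
move: hz; rewrite -/p -inP -hab in_comp => /existsP[y' /andP[h1 _]].
have hy' := aA _ _ h1.
case/unitbP: hAu => _ /(_ y y') h.
have /eqP -> : y == y' by rewrite -h; apply/existsP; exists i; rewrite hiy hy'.
exact: h1.
Qed.


Definition p1l := [:: [:: false;false;true;true]; [::false;true;false;true];
                      [::false;true;true;false]; [::true;false;false;false]].
Definition p2l := [:: [:: false;true;true;true]; [::true;false;false;true];
                      [::true;false;true;false]; [::true;true;false;false]].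
Definition dl := [:: [:: true;false;false;false]; [::false;true;false;false];
                     [::false;false;true;false]; [::false;false;false;true]].
Definition p1 := relof (m_of p1l).
Definition p2 := relof (m_of p2l).

Lemma p1_prime : prime_rel p1.
Proof. apply: check_prime; vm_compute; reflexivity. Qed.
Lemma p2_prime : prime_rel p2.
Proof. apply: check_prime; vm_compute; reflexivity. Qed.
Lemma diag_prime : prime_rel (rel_diag 'I_4).
Proof.
have -> : rel_diag 'I_4 = relof (m_of dl).
  apply/setP => [[i j]]; rewrite in_diag inE /=.
  by case: (ords_cover i) => [->|[->|[->|->]]]; case: (ords_cover j) => [->|[->|[->|->]]].
apply: check_prime; vm_compute; reflexivity.
Qed.
Lemma mrel_relof (m : bm) : mrel (relof m) = m.
Proof.
by apply: functional_extensionality => i; apply: functional_extensionality => j; rewrite /mrel inE.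
Qed.

Lemma fullbE (m : bm) :
  fullb (relof m) = fa (fun i => fa (fun k => ex (fun j => m i j && m k j))).
Proof.
apply/eqP/faP.
- move/setP => h i; apply/faP => k; move: (h (i, k)); rewrite in_setT in_comp exE => /existsP[j].
  by rewrite in_rtr !inE /= => hj; apply/existsP; exists j.
- move=> h; apply/setP => [[i k]]; rewrite in_setT in_comp.
  move/faP: (h i) => /(_ k); rewrite exE => /existsP[j /andP[h1 h2]].
  by apply/existsP; exists j; rewrite in_rtr !inE h1 h2.
Qed.

Lemma p1_nunit : unitb p1 = false.
Proof. by rewrite -unit_fE mrel_relof; vm_compute; reflexivity. Qed.
Lemma p2_nunit : unitb p2 = false.
Proof. by rewrite -unit_fE mrel_relof; vm_compute; reflexivity. Qed.
Lemma p1_nfull : fullb p1 = false.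
Proof. by rewrite fullbE; vm_compute; reflexivity. Qed.
Lemma p2_full : fullb p2 = true.
Proof. by rewrite fullbE; vm_compute; reflexivity. Qed.

Import GRing.Theory.
Local Open Scope ring_scope.

Lemma sum_pick_r (R : pzRingType) m (f : 'I_m.+1 -> R) (P : 'I_m.+1 -> bool) (t : nat) :
  (t < m.+1)%N -> (forall l : 'I_m.+1, P l = (nat_of_ord l == t)) ->
  \sum_(l < m.+1) f l * (P l)%:R = f (inord t).
Proof.
move=> ht hP; rewrite (bigD1 (inord t)) //= hP inordK // eqxx mulr1 big1 ?addr0 //.
move=> l hl; rewrite hP; case: eqP => [e|]; last by rewrite mulr0.
by move: hl; rewrite -e inord_val eqxx.
Qed.

Lemma sum_pick_l (R : pzRingType) m (f : 'I_m.+1 -> R) (P : 'I_m.+1 -> bool) (t : nat) :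
  (t < m.+1)%N -> (forall l : 'I_m.+1, P l = (nat_of_ord l == t)) ->
  \sum_(l < m.+1) (P l)%:R * f l = f (inord t).
Proof.
move=> ht hP; rewrite (bigD1 (inord t)) //= hP inordK // eqxx mul1r big1 ?addr0 //.
move=> l hl; rewrite hP; case: eqP => [e|]; last by rewrite mul0r.
by move: hl; rewrite -e inord_val eqxx.
Qed.

Lemma sum_none (R : pzRingType) m (f g : 'I_m.+1 -> R) :
  (forall l, f l * g l = 0) -> \sum_(l < m.+1) f l * g l = 0.
Proof. by move=> h; rewrite big1. Qed.

Definition Xm (k : fieldType) (n : nat) : 'M[k]_((n + n).+1) :=
  \matrix_(i, j) ((i < n)%N && (nat_of_ord j == i + n)%N)%:R.
Definition Ym (k : fieldType) (n : nat) : 'M[k]_((n + n).+1) :=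
  \matrix_(i, j) ((i < n)%N && (nat_of_ord j == i + n + 1)%N)%:R.

Definition trsupp (k : fieldType) n (A : 'M[k]_((n + n).+1)) :=
  forall i j, A i j != 0 -> (i < n)%N && (n <= j)%N.

Lemma trsupp_mul (k : fieldType) n (A B : 'M[k]_((n + n).+1)) :
  trsupp A -> trsupp B -> A *m B = 0.
Proof.
move=> hA hB; apply/matrixP => i j; rewrite !mxE big1 // => l _.
case: (eqVneq (A i l) 0) => [->|/hA /andP[_ h1]]; first by rewrite mul0r.
case: (eqVneq (B l j) 0) => [->|/hB /andP[h2 _]]; first by rewrite mulr0.
by move: (leq_trans h2 h1); rewrite ltnn.
Qed.

Lemma trsupp_X (k : fieldType) n : trsupp (Xm k n).
Proof.
move=> i j; rewrite mxE; case: andP => [[h1 /eqP ->] _|]; last by rewrite eqxx.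
by rewrite h1 leq_addl.
Qed.

Lemma trsupp_Y (k : fieldType) n : trsupp (Ym k n).
Proof.
move=> i j; rewrite mxE; case: andP => [[h1 /eqP ->] _|]; last by rewrite eqxx.
by rewrite h1 /=; lia.
Qed.



Lemma XE_e (k : fieldType) n (E : 'M[k]_((n + n).+1)) a b : (a < n)%N ->
  (Xm k n *m E) (inord a) (inord b) = E (inord (a + n)) (inord b).
Proof.
move=> ha; rewrite mxE; under eq_bigr => l _ do rewrite mxE.
apply: (@sum_pick_l _ _ _ _ (a + n)); first by lia.
by move=> l; rewrite inordK; [rewrite ha | lia].
Qed.

Lemma YE_e (k : fieldType) n (E : 'M[k]_((n + n).+1)) a b : (a < n)%N ->
  (Ym k n *m E) (inord a) (inord b) = E (inord (a + n + 1)) (inord b).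
Proof.
move=> ha; rewrite mxE; under eq_bigr => l _ do rewrite mxE.
apply: (@sum_pick_l _ _ _ _ (a + n + 1)); first by lia.
by move=> l; rewrite inordK; [rewrite ha | lia].
Qed.

Lemma EX_e (k : fieldType) n (E : 'M[k]_((n + n).+1)) a t : (t < n)%N ->
  (E *m Xm k n) (inord a) (inord (t + n)) = E (inord a) (inord t).
Proof.
move=> ht; rewrite mxE; under eq_bigr => l _ do rewrite mxE.
apply: (@sum_pick_r _ _ _ _ (t)); first by lia.
move=> l; rewrite inordK; last by lia.
rewrite eqn_add2r eq_sym; case: eqP => [->|]; by rewrite ?ht ?andbF.
Qed.

Lemma EY_e (k : fieldType) n (E : 'M[k]_((n + n).+1)) a t : (t < n)%N ->
  (E *m Ym k n) (inord a) (inord (t + n + 1)) = E (inord a) (inord t).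
Proof.
move=> ht; rewrite mxE; under eq_bigr => l _ do rewrite mxE.
apply: (@sum_pick_r _ _ _ _ (t)); first by lia.
move=> l; rewrite inordK; last by lia.
rewrite !eqn_add2r eq_sym; case: eqP => [->|]; by rewrite ?ht ?andbF.
Qed.

Lemma EX_0 (k : fieldType) n (E : 'M[k]_((n + n).+1)) a b :
  (b < n)%N || (b == n + n)%N -> (E *m Xm k n) (inord a) (inord b) = 0.
Proof.
move=> hb; rewrite mxE big1 // => l _; rewrite mxE inordK; last by lia.
case: andP; last by rewrite mulr0.
by move=> [h1 /eqP h2]; exfalso; lia.
Qed.

Lemma EY_0 (k : fieldType) n (E : 'M[k]_((n + n).+1)) a b :
  (b <= n)%N -> (E *m Ym k n) (inord a) (inord b) = 0.
Proof.
move=> hb; rewrite mxE big1 // => l _; rewrite mxE inordK; last by lia.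
case: andP; last by rewrite mulr0.
by move=> [h1 /eqP h2]; exfalso; lia.
Qed.


Lemma scalar0 (k : fieldType) m : (0 : k)%:M = 0 :> 'M_m.
Proof. by apply/matrixP => i j; rewrite !mxE mul0rn. Qed.

Lemma key (k : fieldType) n (E : 'M[k]_((n + n).+1)) :
  E *m Xm k n = Xm k n *m E -> E *m Ym k n = Ym k n *m E -> E *m E = E ->
  E = 0 \/ E = 1%:M.
Proof.
move=> hX hY hE.
have hx a b : (E *m Xm k n) (inord a) (inord b) = (Xm k n *m E) (inord a) (inord b).
  by rewrite hX.
have hy a b : (E *m Ym k n) (inord a) (inord b) = (Ym k n *m E) (inord a) (inord b).
  by rewrite hY.
pose e a b := E (inord a) (inord b).
have e1a a b : (a < n)%N -> (b < n)%N -> e (a + n) b = 0.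
  by move=> ha hb; rewrite /e -XE_e // -hx EX_0 // hb.
have e1b a b : (a < n)%N -> (b < n)%N -> e (a + n + 1) b = 0.
  by move=> ha hb; rewrite /e -YE_e // -hy EY_0 // ltnW.
have e2a a t : (a < n)%N -> (t < n)%N -> e a t = e (a + n) (t + n).
  by move=> ha ht; rewrite /e -EX_e // hx XE_e.
have e2b a t : (a < n)%N -> (t < n)%N -> e a t = e (a + n + 1) (t + n + 1).
  by move=> ha ht; rewrite /e -EY_e // hy YE_e.
have e3a a : (a < n)%N -> e (a + n) (n + n) = 0.
  by move=> ha; rewrite /e -XE_e // -hx EX_0 // eqxx orbT.
have e3b a : (a < n)%N -> e (a + n + 1) n = 0.
  by move=> ha; rewrite /e -YE_e // -hy EY_0.
pose B x y := e (x + n) (y + n).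
have shift x y : (x < n)%N -> (y < n)%N -> B x y = B x.+1 y.+1.
  move=> hx' hy'; rewrite /B -(e2a x y) // (e2b x y) //.
  by congr (e _ _); lia.
have Bn x : (x < n)%N -> B x n = 0 by move=> h; rewrite /B e3a.
have B0 x : (x < n)%N -> B x.+1 0 = 0.
  by move=> h; rewrite /B -(e3b x h); congr (e _ _); lia.
have upper s : forall x y, (y + s = n)%N -> (x < y)%N -> B x y = 0.
  elim: s => [|s IH] x y hs hxy.
    by rewrite addn0 in hs; rewrite hs Bn // -hs.
  rewrite shift; [apply: IH|lia|lia]; lia.
have lower y : forall x, (y < x)%N -> (x <= n)%N -> B x y = 0.
  elim: y => [|y IH] [|x] // hxy hxn; first by apply: B0.
  rewrite -shift; [apply: IH|lia|lia]; lia.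
have diag x : (x <= n)%N -> B x x = B 0 0.
  elim: x => [|x IH] // hx'; rewrite -shift; [apply: IH|lia|lia]; lia.
set c := B 0 0.
have Bv x y : (x <= n)%N -> (y <= n)%N -> B x y = c *+ (x == y).
  move=> hx' hy'; case: (ltngtP x y) => h.
  - by rewrite (upper (n - y)%N x y) ?mulr0n //; lia.
  - by rewrite lower // mulr0n.
  - by rewrite h diag // eqxx mulr1n.
have Eij (i j : 'I_((n + n).+1)) : ~~ ((i < n)%N && (n <= j)%N) -> E i j = c *+ (i == j).
  have -> : E i j = e i j by rewrite /e !inord_val.
  have hi := ltn_ord i; have hj := ltn_ord j.
  case: (ltnP i n) => hin /=; case: (ltnP j n) => hjn //= _.
  - rewrite e2a // -/(B i j) Bv //; [exact: ltnW | exact: ltnW].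
  - have -> : nat_of_ord i = (i - n + n)%N by lia.
    case: (ltnP (i - n) n) => hxn.
    + rewrite e1a //; case: eqP => [e'|]; last by rewrite mulr0n.
      by rewrite e' in hin; lia.
    + have -> : (i - n + n = (n - 1) + n + 1)%N by lia.
      rewrite e1b; [|lia|lia]; case: eqP => [e'|]; last by rewrite mulr0n.
      by rewrite e' in hin; lia.
  - have -> : nat_of_ord i = (i - n + n)%N by lia.
    have -> : nat_of_ord j = (j - n + n)%N by lia.
    rewrite -/(B (i - n)%N (j - n)%N) Bv; [|lia|lia].
    congr (c *+ nat_of_bool _); apply/eqP/eqP => h; first by apply: val_inj => /=; lia.
    by rewrite h.
pose N := E - c%:M.
have hN : trsupp N.
  move=> i j; apply: contraR => h; rewrite /N !mxE Eij // subrr //.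
have EN : E = c%:M + N by rewrite /N addrC subrK.
have NN : N *m N = 0 by apply: trsupp_mul.
clearbody N.
have Nnn : N (inord n) (inord n) = 0.
  apply/eqP; apply: contraT => /hN; rewrite inordK //; [by rewrite ltnn | lia].
have hE2 : E *m E = (c * c)%:M + (c + c) *: N.
  rewrite EN mulmxDl !mulmxDr NN addr0 mul_scalar_mx mul_mx_scalar scalar_mxM.
  by rewrite !mul_scalar_mx scalerDl addrA.
have cc : c * c = c.
  have := congr1 (fun M : 'M_((n + n).+1) => M (inord n) (inord n)) hE.
  by rewrite hE2 EN !mxE Nnn eqxx !mulr1n mulr0 !addr0.
have [c0|c1] : c = 0 \/ c = 1.
  have : c * (c - 1) = 0 by rewrite mulrBr mulr1 cc subrr.
  by move/eqP; rewrite mulf_eq0 subr_eq0 => /orP[/eqP|/eqP]; [left|right].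
- left; rewrite EN c0 scalar0 add0r.
  by have := hE; rewrite EN c0 scalar0 add0r NN => <-.
- right; have : N = 0.
    move: hE; rewrite hE2 EN c1 mulr1 scalerDl scale1r => /addrI h.
    by move/(congr1 (fun M => M - N)): h; rewrite addrK subrr.
  by move=> N0; rewrite EN c1 N0 addr0.
Qed.


Lemma inO_sym (X : finType) (p R : rel_on X) : inO p R -> inO R p.
Proof.
move=> /existsP[u /existsP[v /and3P[hu hv /eqP e]]].
apply/existsP; exists (rtr u); apply/existsP; exists (rtr v).
by rewrite !unit_tr //= e rcompA unitKr // unitKl.
Qed.

Definition rho (k : fieldType) n (R : rel_on 'I_4) : 'M[k]_((n + n).+1) :=
  if unitb R then 1%:M else if inO p1 R then Xm k n
  else if inO p2 R then Ym k n else 0.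

Lemma rho_rep (k : fieldType) n : is_BX_rep (rho k n).
Proof.
split; first by rewrite /rho unit_diag.
move=> R S; rewrite /rho.
case hR: (unitb R).
  by rewrite unit_compl // !inO_l // mulmx1.
case hS: (unitb S).
  by rewrite unit_compr // !inO_r // hR mul1mx.
have nu : unitb (rel_comp R S) = false.
  by apply/negbTE/negP => h; have := prime_unit diag_prime h; rewrite hR hS.
have n1 : inO p1 (rel_comp R S) = false.
  by apply/negbTE/negP => h; have := prime_inO p1_prime h erefl; rewrite hR hS.
have n2 : inO p2 (rel_comp R S) = false.
  by apply/negbTE/negP => h; have := prime_inO p2_prime h erefl; rewrite hR hS.
rewrite nu n1 n2.
have tX := @trsupp_X k n; have tY := @trsupp_Y k n.
have t0 : trsupp (0 : 'M[k]_((n + n).+1)) by move=> i j; rewrite mxE eqxx.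
have tT : forall T, trsupp (if inO p1 T then Xm k n else if inO p2 T then Ym k n else 0).
  by move=> T; case: ifP => _ //; case: ifP.
by rewrite trsupp_mul.
Qed.

Definition Mn (k : fieldType) n : BXmod k 'I_4 := BXMod (rho_rep k n).

Lemma rho_p1 (k : fieldType) n : rho k n p1 = Xm k n.
Proof. by rewrite /rho p1_nunit inO_self. Qed.

Lemma rho_p2 (k : fieldType) n : rho k n p2 = Ym k n.
Proof.
rewrite /rho p2_nunit inO_self.
have -> : inO p1 p2 = false; last by [].
apply/negbTE/negP => /inO_sym h.
by have := inO_full h p2_full; rewrite p1_nfull.
Qed.

Lemma Mn_indec (k : fieldType) n : indecomposable (Mn k n).
Proof.
split; first by [].
move=> [U [W [hU hW sU sW /andP[cap sum]]]].
move/eqmx0P: cap => cap; case/andP: sum => _ sum.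
set E := proj_mx U W.
have hUid : forall A : 'M_(mdim (Mn k n)), (A <= U)%MS -> A *m E = A.
  by move=> A hA; apply: proj_mx_id.
have hW0 : forall A : 'M_(mdim (Mn k n)), (A <= W)%MS -> A *m E = 0.
  by move=> A hA; apply: proj_mx_0.
have EE : E *m E = E by apply: proj_mx_proj.
clearbody E.
have comm M : stablemx U M -> stablemx W M -> E *m M = M *m E.
  move=> sUM sWM; apply/eqP; rewrite -subr_eq0; apply/eqP.
  set D := E *m M - M *m E.
  have eU : U *m E = U := hUid _ (submx_refl U).
  have eUM : U *m M *m E = U *m M := hUid _ sUM.
  have eW : W *m E = 0 := hW0 _ (submx_refl W).
  have eWM : W *m M *m E = 0 := hW0 _ sWM.
  have hUD : U *m D = 0 by rewrite /D mulmxBr !mulmxA eU eUM subrr.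
  have hWD : W *m D = 0 by rewrite /D mulmxBr !mulmxA eW mul0mx eWM subrr.
  have : (1%:M <= kermx D)%MS.
    by apply: submx_trans sum _; rewrite addsmx_sub !sub_kermx hUD hWD eqxx.
  by move/sub_kermxP; rewrite mul1mx.
have cX : E *m Xm k n = Xm k n *m E.
  by apply: comm; rewrite -(rho_p1 k n); [apply: (sU p1) | apply: (sW p1)].
have cY : E *m Ym k n = Ym k n *m E.
  by apply: comm; rewrite -(rho_p2 k n); [apply: (sU p2) | apply: (sW p2)].
case: (key cX cY EE) => hE.
- have eU : U *m E = U := hUid _ (submx_refl U).
  by move/negP: hU; apply; rewrite -eU hE mulmx0.
- have eW : W *m E = 0 := hW0 _ (submx_refl W).
  by move/negP: hW; apply; rewrite -(mulmx1 W) -hE eW.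
Qed.

Lemma infinite_I4 (k : fieldType) : infinite_rep_type k 'I_4.
Proof.
move=> [N [F hF]].
set bnd := (\max_(i < N) mdim (F i))%N.
have [i [P [Q [hPQ hQP _]]]] := hF (Mn k bnd) (Mn_indec k bnd).
have h1 : ((bnd + bnd).+1 <= mdim (F i))%N.
  have := mulmx_max_rank P Q; rewrite hPQ mxrank1 //.
have h2 : (mdim (F i) <= bnd)%N by apply: (leq_bigmax i).
lia.
Qed.


Lemma transport (k : fieldType) (X Y : finType) (G : rel_on X -> rel_on Y)
  (F : rel_on Y -> rel_on X) :
  cancel G F -> cancel F G ->
  (forall R S, G (rel_comp R S) = rel_comp (G R) (G S)) ->
  G (rel_diag X) = rel_diag Y ->
  infinite_rep_type k Y -> infinite_rep_type k X.
Proof.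
move=> GK FK Gm Gd hY [N [Fam hFam]]; apply: hY.
have Fm R S : F (rel_comp R S) = rel_comp (F R) (F S).
  by rewrite -{1}(FK R) -{1}(FK S) -Gm GK.
have Fd : F (rel_diag Y) = rel_diag X by rewrite -Gd GK.
have repF (M : BXmod k X) : is_BX_rep (fun R => mact M (F R)).
  case: (mact_rep M) => h1 h2; split; first by rewrite Fd h1.
  by move=> R S; rewrite Fm h2.
have repG (M : BXmod k Y) : is_BX_rep (fun R => mact M (G R)).
  case: (mact_rep M) => h1 h2; split; first by rewrite Gd h1.
  by move=> R S; rewrite Gm h2.
exists N, (fun i => BXMod (repF (Fam i))) => M hM.
have hM' : indecomposable (BXMod (repG M)).
  case: hM => h0 hnd; split => //= -[U [W [hU hW sU sW hUW]]]; apply: hnd.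
  exists U, W; split => // R; rewrite -(FK R); [exact: sU | exact: sW].
have [i [P [Q [h1 h2 h3]]]] := hFam _ hM'.
exists i, P, Q; split => // R /=.
by have := h3 (F R); rewrite /= FK.
Qed.

Local Close Scope ring_scope.

Theorem theorem6 (X : finType) (hX : #|X| = 4) (k : fieldType) :
  infinite_rep_type k X.
Proof.
pose h (i : 'I_4) : X := enum_val (cast_ord (esym hX) i).
pose g (x : X) : 'I_4 := cast_ord hX (enum_rank x).
have hg : cancel g h by move=> x; rewrite /h /g cast_ordK enum_rankK.
have gh : cancel h g by move=> i; rewrite /h /g enum_valK cast_ordKV.
pose G (R : rel_on X) : rel_on 'I_4 := [set q | (h q.1, h q.2) \in R].
pose F (R : rel_on 'I_4) : rel_on X := [set q | (g q.1, g q.2) \in R].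
apply: (@transport k X 'I_4 G F).
- by move=> R; apply/setP => [[x y]]; rewrite !inE /= !hg.
- by move=> R; apply/setP => [[x y]]; rewrite !inE /= !gh.
- move=> R S; apply/setP => [[i j]]; rewrite in_comp inE /= in_comp.
  apply/existsP/existsP => [[y hy]|[l hl]].
  + by exists (g y); rewrite !inE /= hg.
  + by exists (h l); move: hl; rewrite !inE.
- apply/setP => [[i j]]; rewrite !inE /= (can_eq gh) //.
- exact: infinite_I4.
Qed.
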